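(* Let $\mu>0$, $T_s>0$, $T_w>0$, let $Q_w\ge 1$ be an integer, and for $\rho\in(0,1)$ define $$f(\rho)=\frac{\Gamma(Q_w+1,\mu\rho T_s)-\mu\rho T_s\,\Gamma(Q_w,\mu\rho T_s)}{\mu\rho\,\Gamma(Q_w)},$$ and $b=T_s+T_w$, where $\Gamma(\cdot)$ is the Gamma function and $\Gamma(s,x)=\int_x^\infty u^{s-1}e^{-u}\,du$ is the upper incomplete Gamma function. Then $f''(\rho)\bigl(f(\rho)+b\bigr)\ge 2\bigl(f'(\rho)\bigr)^2$ for all $\rho\in(0,1)$; consequently, for any $\sigma_{\mathrm{off}}\in[0,1)$, the function $E(\rho)=1-(1-\sigma_{\mathrm{off}})(1-\rho)\dfrac{f(\rho)}{f(\rho)+T_s+T_w}$ is concave on $(0,1)$.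
   Context: This $f$ is the exact mean low-power time of an Energy Efficient Ethernet link under the ''burst transmission'' policy in the high-load regime with Poisson arrivals at normalized load $\rho$, where $\mu^{-1}$ is the mean packet transmission time, $T_s,T_w$ are the sleep and wake transition times, $Q_w$ is the burst size threshold, and $\sigma_{\mathrm{off}}$ is the relative power in the idle state; $E(\rho)$ is the normalized link energy consumption. *)

(* Defs.v *)
From Stdlib Require Import Reals.
From Coquelicot Require Import Coquelicot.
Open Scope R_scope.

Definition upper_inc_gamma (s : nat) (x : R) : R :=
  RInt_gen (fun u => u ^ (s - 1) * exp (- u)) (at_point x) (Rbar_locally p_infty).

Definition Gamma_fun (s : nat) : R := upper_inc_gamma s 0.

Definition f_lowpower (mu Ts : R) (Qw : nat) (rho : R) : R :=
  (upper_inc_gamma (Qw + 1) (mu * rho * Ts)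
     - mu * rho * Ts * upper_inc_gamma Qw (mu * rho * Ts))
  / (mu * rho * Gamma_fun Qw).

Definition E_energy (mu Ts Tw sigma_off : R) (Qw : nat) (rho : R) : R :=
  1 - (1 - sigma_off) * (1 - rho) *
      (f_lowpower mu Ts Qw rho / (f_lowpower mu Ts Qw rho + Ts + Tw)).

Definition concave_on (a b : R) (g : R -> R) : Prop :=
  forall x y t, a < x < b -> a < y < b -> 0 <= t <= 1 ->
    t * g x + (1 - t) * g y <= g (t * x + (1 - t) * y).

(* Main.v *)
Require Import Defs.
From Stdlib Require Import Reals Lra Lia Factorial.
From Coquelicot Require Import Coquelicot.
Open Scope R_scope.

Definition P (n : nat) (x : R) := sum_f_R0 (fun k => x ^ k / INR (fact k)) n.

Lemma P_S n x : P (S n) x = P n x + x ^ S n / INR (fact (S n)).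
Proof. reflexivity. Qed.

Lemma fact_pos' n : 0 < INR (fact n).
Proof. apply lt_0_INR, lt_O_fact. Qed.

Lemma pow_div_deriv k c x : is_derive (fun t => t ^ S k / c) x (INR (S k) * x ^ k / c).
Proof. auto_derive; auto. rewrite S_INR. destruct k; simpl; unfold Rdiv; ring. Qed.

Lemma P_deriv n x : is_derive (P (S n)) x (P n x).
Proof.
  induction n.
  - unfold P; simpl. auto_derive; auto. field.
  - apply (is_derive_ext (fun t => P (S n) t + t ^ S (S n) / INR (fact (S (S n))))).
    { intro t; rewrite (P_S (S n) t); reflexivity. }
    assert (H2 : is_derive (fun t => t ^ S (S n) / INR (fact (S (S n)))) x
               (INR (S (S n)) * x ^ (S n) / INR (fact (S (S n))))).
    { apply pow_div_deriv. }
    pose proof (is_derive_plus _ _ _ _ _ IHn H2) as H3.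
    replace (P (S n) x) with (Rplus (P n x) (INR (S (S n)) * x ^ (S n) / INR (fact (S (S n))))).
    exact H3.
    rewrite P_S.
    rewrite !(fact_simpl (S n)), !mult_INR. pose proof (fact_pos' (S n)).
    assert (0 < INR (S (S n))) by (apply lt_0_INR; lia). field. lra.
Qed.

Lemma P_ge0 n x : 0 <= x -> 0 <= P n x.
Proof.
  intro Hx. induction n. unfold P; simpl; lra.
  rewrite P_S. pose proof (fact_pos' (S n)). pose proof (pow_le x (S n) Hx).
  assert (0 <= x ^ S n / INR (fact (S n))) by (apply Rdiv_le_0_compat; lra). lra.
Qed.

Lemma P_le_exp n x : 0 <= x -> P n x <= exp x.
Proof. intro; apply exp_ge_taylor; auto. Qed.

Lemma P_0 n : P n 0 = 1.
Proof. induction n. unfold P; simpl; lra. rewrite P_S, IHn. simpl. lra. Qed.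

Definition U (n : nat) (x : R) := INR (fact n) * exp (- x) * P n x.

Lemma U_deriv n x : is_derive (U n) x (- (x ^ n * exp (- x))).
Proof.
  unfold U. destruct n.
  - apply (is_derive_ext (fun t => 1 * exp (- t) * 1)).
    { intro t. unfold P; simpl. field. }
    auto_derive; auto. simpl; field.
  - pose proof (P_deriv n x).
    auto_derive. exists (P n x); exact H.
    replace (Derive (fun x0 : R => P (S n) x0) x) with (P n x)
      by (symmetry; apply is_derive_unique; exact H).
    rewrite P_S. change (fact n + n * fact n)%nat with (fact (S n)).
    pose proof (fact_pos' (S n)). field. lra.
Qed.

Lemma fact_ge1 k : 1 <= INR (fact k).
Proof. apply (le_INR 1). pose proof (lt_O_fact k). lia. Qed.

Lemma P_le_pow n u : 1 <= u -> P n u <= INR (S n) * u ^ n.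
Proof.
  intro Hu. induction n. unfold P; simpl; lra.
  rewrite P_S. rewrite (S_INR (S n)).
  assert (u ^ n <= u ^ S n). { simpl. pose proof (pow_le u n ltac:(lra)). nra. }
  assert (u ^ S n / INR (fact (S n)) <= u ^ S n).
  { pose proof (fact_ge1 (S n)). pose proof (pow_le u (S n) ltac:(lra)).
    apply Rmult_le_reg_r with (INR (fact (S n))). lra.
    unfold Rdiv. rewrite Rmult_assoc, Rinv_l by lra. nra. }
  assert (0 <= INR (S n)) by apply pos_INR. nra.
Qed.

Lemma U_bound n u : 1 <= u -> 0 <= U n u <= INR (fact n) * INR (S n) * INR (fact (S n)) / u.
Proof.
  intro Hu. unfold U. pose proof (fact_pos' n). pose proof (fact_pos' (S n)).
  pose proof (exp_pos (-u)). pose proof (P_ge0 n u ltac:(lra)).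
  split. apply Rmult_le_pos; [apply Rmult_le_pos|]; lra.
  pose proof (P_le_pow n u Hu).
  assert (Hb : u ^ S n / INR (fact (S n)) <= exp u).
  { eapply Rle_trans; [|apply (P_le_exp (S n)); lra]. rewrite P_S.
    pose proof (P_ge0 n u ltac:(lra)). lra. }
  assert (Hpos : 0 < u ^ n) by (apply pow_lt; lra).
  assert (He : exp (- u) * exp u = 1) by (rewrite <- exp_plus; replace (-u+u) with 0 by ring; apply exp_0).
  assert (H5 : exp (- u) <= INR (fact (S n)) / u ^ S n).
  { apply Rmult_le_reg_r with (u ^ S n / INR (fact (S n))).
    apply Rdiv_lt_0_compat; [apply pow_lt; lra| lra].
    replace (INR (fact (S n)) / u ^ S n * (u ^ S n / INR (fact (S n)))) with 1
      by (field; split; [|apply pow_nonzero]; lra).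
    rewrite <- He. apply Rmult_le_compat_l; lra. }
  apply Rle_trans with (INR (fact n) * (INR (fact (S n)) / u ^ S n) * (INR (S n) * u ^ n)).
  apply Rmult_le_compat; [apply Rmult_le_pos; lra | lra | | lra].
  apply Rmult_le_compat_l; lra.
  right. simpl (u ^ S n). field. lra.
Qed.

Lemma U_lim n : is_lim (U n) p_infty 0.
Proof.
  set (C := INR (fact n) * INR (S n) * INR (fact (S n))).
  apply (is_lim_le_le_loc (fun _ => 0) (fun u => C * / u)).
  - exists 1. intros u Hu. apply U_bound. lra.
  - apply is_lim_const.
  - replace (Finite 0) with (Rbar_mult C (Rbar_inv p_infty)). 2:{ simpl. rewrite Rmult_0_r. reflexivity. }
    apply is_lim_scal_l. apply is_lim_inv. apply is_lim_id. discriminate.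
Qed.

Lemma gamma_closed n x : upper_inc_gamma (S n) x = U n x.
Proof.
  unfold upper_inc_gamma.
  apply is_RInt_gen_unique.
  replace (U n x) with (0 - (- U n x)) by ring.
  apply (is_RInt_gen_ext (Derive (fun u => - U n u))).
  - apply filter_forall. intros [a b] t _. simpl.
    rewrite (is_derive_unique _ _ (- - (t ^ n * exp (-t)))).
    replace (n - 0)%nat with n by lia. apply Ropp_involutive.
    exact (is_derive_opp (U n) t _ (U_deriv n t)).
  - apply is_RInt_gen_Derive.
    + apply filter_forall. intros [a b] t _. eexists. exact (is_derive_opp (U n) t _ (U_deriv n t)).
    + apply filter_forall. intros [a b] t _.
      apply continuous_ext with (fun u => u ^ n * exp (- u)).
      { intro u. symmetry. rewrite (is_derive_unique _ _ (- - (u ^ n * exp (-u)))).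
        apply Ropp_involutive. exact (is_derive_opp (U n) u _ (U_deriv n u)). }
      apply (ex_derive_continuous (fun u => u ^ n * exp (- u))). auto_derive. auto.
    + intros Pr HP. apply locally_singleton in HP. exact HP.
    + replace (locally 0) with (Rbar_locally (Finite (- 0))) by (rewrite Ropp_0; reflexivity).
      apply (is_lim_opp (U n) p_infty 0). apply U_lim.
Qed.

Lemma Gamma_closed m : Gamma_fun (S m) = INR (fact m).
Proof. unfold Gamma_fun. rewrite gamma_closed. unfold U. rewrite P_0, Ropp_0, exp_0. ring. Qed.

Definition phi m x := (U (S m) x - x * U m x) / INR (fact m).
Definition phi1 m x := - U m x / INR (fact m).
Definition phi2 m x := x ^ m * exp (- x) / INR (fact m).

Lemma is_derive_Rminus f g x a b : is_derive f x a -> is_derive g x b -> is_derive (fun t => f t - g t) x (a - b).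
Proof. intros. exact (is_derive_minus f g x a b H H0). Qed.
Lemma is_derive_Rplus f g x a b : is_derive f x a -> is_derive g x b -> is_derive (fun t => f t + g t) x (a + b).
Proof. intros. exact (is_derive_plus f g x a b H H0). Qed.
Lemma is_derive_val (f : R -> R) x a b : a = b -> is_derive f x a -> is_derive f x b.
Proof. intros ->; auto. Qed.

Lemma DU n x : Derive (fun t => U n t) x = - (x ^ n * exp (- x)).
Proof. apply is_derive_unique, U_deriv. Qed.
Lemma EU n x : ex_derive (fun t => U n t) x.
Proof. eexists; apply U_deriv. Qed.

Lemma phi_deriv m x : is_derive (phi m) x (phi1 m x).
Proof.
  unfold phi, phi1. pose proof (fact_pos' m).
  auto_derive. repeat split; try apply EU; lra.
  rewrite !DU. simpl. field. lra.
Qed.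

Lemma phi1_deriv m x : is_derive (phi1 m) x (phi2 m x).
Proof.
  unfold phi1, phi2. pose proof (fact_pos' m).
  auto_derive. repeat split; try apply EU; lra.
  rewrite !DU. field. lra.
Qed.

Definition Rm m x := INR (S m) * P (S m) x - x * P m x.

Lemma Rm_ge0 m x : 0 <= x -> 0 <= Rm m x.
Proof.
  intro Hx. induction m.
  - unfold Rm, P; simpl. lra.
  - assert (Rm (S m) x = Rm m x + P (S m) x).
    { unfold Rm. rewrite (P_S (S m)), (P_S m).
      rewrite (fact_simpl (S m)), (fact_simpl m), !mult_INR.
      pose proof (fact_pos' m). rewrite !(S_INR (S m)), !S_INR. simpl pow. field.
      pose proof (pos_INR m). split; lra. }
    rewrite H. pose proof (P_ge0 (S m) x Hx). lra.
Qed.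

Lemma phi_eq m x : phi m x = exp (- x) * Rm m x.
Proof.
  unfold phi, U, Rm. rewrite fact_simpl, mult_INR. pose proof (fact_pos' m). field. lra.
Qed.

Lemma phi_ge0 m x : 0 <= x -> 0 <= phi m x.
Proof. intro. rewrite phi_eq. apply Rmult_le_pos. left; apply exp_pos. apply Rm_ge0; auto. Qed.

Lemma phi1_bounds m x : 0 <= x -> 0 <= - phi1 m x <= 1.
Proof.
  intro Hx. unfold phi1, U. pose proof (fact_pos' m).
  replace (- (- (INR (fact m) * exp (- x) * P m x) / INR (fact m))) with (exp (- x) * P m x) by (field; lra).
  pose proof (exp_pos (-x)). pose proof (P_ge0 m x Hx). pose proof (P_le_exp m x Hx).
  split. nra.
  assert (exp (-x) * exp x = 1) by (rewrite <- exp_plus; replace (-x+x) with 0 by ring; apply exp_0).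
  nra.
Qed.

Lemma phi2_ge0 m x : 0 <= x -> 0 <= phi2 m x.
Proof.
  intro Hx. unfold phi2. pose proof (fact_pos' m). pose proof (exp_pos (-x)).
  pose proof (pow_le x m Hx). apply Rdiv_le_0_compat; [apply Rmult_le_pos|]; lra.
Qed.

Lemma f_closed mu Ts m r : 0 < mu -> 0 < r ->
  f_lowpower mu Ts (S m) r = phi m (mu * r * Ts) / (mu * r).
Proof.
  intros. unfold f_lowpower. replace (S m + 1)%nat with (S (S m)) by lia.
  rewrite !gamma_closed, Gamma_closed. unfold phi. pose proof (fact_pos' m).
  field. repeat split; lra.
Qed.

Section Gen.
Variables (g g1 g2 : R -> R) (c mu : R).
Hypothesis Hg : forall y, is_derive g y (g1 y).
Hypothesis Hg1 : forall y, is_derive g1 y (g2 y).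
Hypothesis Hmu : mu <> 0.

Definition F0 t := g (c * t) / (mu * t).
Definition D1 t := c * g1 (c * t) / (mu * t) - g (c * t) / (mu * t ^ 2).
Definition D2 t := c * c * g2 (c * t) / (mu * t) - 2 * c * g1 (c * t) / (mu * t ^ 2)
   + 2 * g (c * t) / (mu * t ^ 3).

Lemma Dg y : Derive (fun t => g t) y = g1 y. Proof. apply is_derive_unique, Hg. Qed.
Lemma Dg1 y : Derive (fun t => g1 t) y = g2 y. Proof. apply is_derive_unique, Hg1. Qed.

Lemma F0_deriv r : r <> 0 -> is_derive F0 r (D1 r).
Proof.
  intro Hr. unfold F0, D1. auto_derive.
  repeat split; try (eexists; apply Hg); try (repeat apply Rmult_integral_contrapositive_currified; auto; lra).
  rewrite Dg. field. split; auto.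
Qed.

Lemma D1_deriv r : r <> 0 -> is_derive D1 r (D2 r).
Proof.
  intro Hr. unfold D1, D2. auto_derive.
  repeat split; try (eexists; apply Hg); try (eexists; apply Hg1); try (repeat apply Rmult_integral_contrapositive_currified; auto; lra).
  rewrite Dg, Dg1. field. split; auto.
Qed.
End Gen.

Lemma key_ineq mu Ts Tw r p a q :
  0 < mu -> 0 < Ts -> 0 < Tw -> 0 < r -> 0 <= p -> 0 <= a <= 1 -> 0 <= q ->
  let c := mu * Ts in
  (c * c * q / (mu * r) - 2 * c * (- a) / (mu * r ^ 2) + 2 * p / (mu * r ^ 3)) *
  (p / (mu * r) + (Ts + Tw)) >= 2 * (c * (- a) / (mu * r) - p / (mu * r ^ 2)) ^ 2.
Proof.
  intros Hmu HTs HTw Hr Hp Ha Hq c.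
  set (A := c * c * q * r ^ 2 + 2 * c * a * r + 2 * p).
  set (B := p + (Ts + Tw) * mu * r).
  assert (Hd : A * B - 2 * (c * a * r + p) ^ 2 =
     c * c * q * r ^ 2 * p + (Ts + Tw) * mu * r * (c * c * q * r ^ 2)
     + 2 * c * c * a * (1 - a) * r ^ 2 + 2 * Tw * mu * c * a * r ^ 2
     + 2 * c * r * p * (1 - a) + 2 * Tw * mu * r * p).
  { unfold A, B, c. ring. }
  assert (Hc : 0 < c) by (unfold c; nra).
  assert (H0 : 0 <= A * B - 2 * (c * a * r + p) ^ 2).
  { rewrite Hd.
    assert (0 <= r ^ 2) by nra.
    assert (0 <= c * c * q * r ^ 2 * p) by (repeat apply Rmult_le_pos; nra).
    assert (0 <= (Ts + Tw) * mu * r * (c * c * q * r ^ 2)) by (repeat apply Rmult_le_pos; nra).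
    assert (0 <= 2 * c * c * a * (1 - a) * r ^ 2) by (repeat apply Rmult_le_pos; nra).
    assert (0 <= 2 * Tw * mu * c * a * r ^ 2) by (repeat apply Rmult_le_pos; nra).
    assert (0 <= 2 * c * r * p * (1 - a)) by (repeat apply Rmult_le_pos; nra).
    assert (0 <= 2 * Tw * mu * r * p) by (repeat apply Rmult_le_pos; nra).
    lra. }
  apply Rle_ge. apply Rminus_le_0.
  replace ((c * c * q / (mu * r) - 2 * c * - a / (mu * r ^ 2) + 2 * p / (mu * r ^ 3)) *
    (p / (mu * r) + (Ts + Tw)) - 2 * (c * - a / (mu * r) - p / (mu * r ^ 2)) ^ 2)
    with ((A * B - 2 * (c * a * r + p) ^ 2) / (mu ^ 2 * r ^ 4)).
  apply Rdiv_le_0_compat; auto. apply Rmult_lt_0_compat; apply pow_lt; auto.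
  unfold A, B. field. split; lra.
Qed.

Lemma convex_d2 (K K1 K2 : R -> R) a b :
  (forall r, a < r < b -> is_derive K r (K1 r)) ->
  (forall r, a < r < b -> is_derive K1 r (K2 r)) ->
  (forall r, a < r < b -> 0 <= K2 r) ->
  forall x y t, a < x < b -> a < y < b -> 0 <= t <= 1 ->
  K (t * x + (1 - t) * y) <= t * K x + (1 - t) * K y.
Proof.
  intros HK HK1 HK2.
  assert (Mono : forall u v, a < u -> u <= v -> v < b -> K1 u <= K1 v).
  { intros u v Hu Huv Hv. destruct (Req_dec u v) as [->|Hne]. lra.
    destruct (MVT_cor2 K1 K2 u v) as [xi [Hxi Hin]]. lra.
    intros cc Hc. apply is_derive_Reals. apply HK1. lra.
    assert (0 <= K2 xi) by (apply HK2; lra). nra. }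
  assert (Main : forall x y t, a < x < b -> a < y < b -> x < y -> 0 < t < 1 ->
     K (t * x + (1 - t) * y) <= t * K x + (1 - t) * K y).
  { intros x y t Hx Hy Hxy Ht. set (z := t * x + (1 - t) * y).
    assert (x < z < y) by (unfold z; nra).
    destruct (MVT_cor2 K K1 x z) as [x1 [H1 Hi1]]. lra.
    intros cc Hc. apply is_derive_Reals. apply HK. lra.
    destruct (MVT_cor2 K K1 z y) as [x2 [H2 Hi2]]. lra.
    intros cc Hc. apply is_derive_Reals. apply HK. lra.
    assert (K1 x1 <= K1 x2) by (apply Mono; lra).
    assert (Hzx : z - x = (1 - t) * (y - x)) by (unfold z; ring).
    assert (Hyz : y - z = t * (y - x)) by (unfold z; ring).
    rewrite Hzx in H1. rewrite Hyz in H2.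
    assert (t * (K z - K x) <= (1 - t) * (K y - K z)).
    { rewrite H1, H2. assert (0 <= t * (1 - t) * (y - x)) by (repeat apply Rmult_le_pos; lra).
      nra. }
    lra. }
  intros x y t Hx Hy Ht.
  destruct (Req_dec t 0) as [->|Ht0].
  { replace (0 * x + (1 - 0) * y) with y by ring. lra. }
  destruct (Req_dec t 1) as [->|Ht1].
  { replace (1 * x + (1 - 1) * y) with x by ring. lra. }
  destruct (Rtotal_order x y) as [Hlt|[->|Hgt]].
  - apply Main; auto; lra.
  - replace (t * y + (1 - t) * y) with y by ring. lra.
  - pose proof (Main y x (1 - t) Hy Hx Hgt ltac:(lra)).
    replace (t * x + (1 - t) * y) with ((1 - t) * y + (1 - (1 - t)) * x) by ring. lra.
Qed.

Section KS.
Variables (F D1 D2 : R -> R) (b : R).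
Hypothesis HF : forall r, 0 < r < 1 -> is_derive F r (D1 r).
Hypothesis HD : forall r, 0 < r < 1 -> is_derive D1 r (D2 r).
Hypothesis Fpos : forall r, 0 < r < 1 -> 0 <= F r.
Hypothesis D1neg : forall r, 0 < r < 1 -> D1 r <= 0.
Hypothesis Ineq : forall r, 0 < r < 1 -> D2 r * (F r + b) >= 2 * D1 r ^ 2.
Hypothesis Hb : 0 < b.

Definition K r := (1 - r) * (F r / (F r + b)).
Definition K1 r := - (F r / (F r + b)) + (1 - r) * (b * D1 r / (F r + b) ^ 2).
Definition K2 r := - 2 * (b * D1 r / (F r + b) ^ 2)
   + (1 - r) * (b * (D2 r * (F r + b) - 2 * D1 r ^ 2) / (F r + b) ^ 3).

Lemma K_convex : forall x y t, 0 < x < 1 -> 0 < y < 1 -> 0 <= t <= 1 ->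
  K (t * x + (1 - t) * y) <= t * K x + (1 - t) * K y.
Proof.
  apply convex_d2 with K1 K2.
  - intros r Hr. pose proof (HF r Hr). pose proof (Fpos r Hr). unfold K, K1.
    auto_derive. split; [eexists; eauto | split; [eexists; eauto|split; auto; lra]].
    replace (Derive (fun x => F x) r) with (D1 r) by (symmetry; apply is_derive_unique; auto).
    field. lra.
  - intros r Hr. pose proof (HF r Hr). pose proof (HD r Hr). pose proof (Fpos r Hr). unfold K1, K2.
    auto_derive. repeat split; try (eexists; eauto); try lra;
      try (repeat apply Rmult_integral_contrapositive_currified; lra).
    replace (Derive (fun x => F x) r) with (D1 r) by (symmetry; apply is_derive_unique; auto).
    replace (Derive (fun x => D1 x) r) with (D2 r) by (symmetry; apply is_derive_unique; auto).
    field. lra.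
  - intros r Hr. unfold K2. clear HF HD. pose proof (Fpos r Hr). pose proof (D1neg r Hr). pose proof (Ineq r Hr).
    assert (0 < F r + b) by lra.
    assert (0 <= - 2 * (b * D1 r / (F r + b) ^ 2)).
    { unfold Rdiv. assert (0 < / (F r + b) ^ 2) by (apply Rinv_0_lt_compat, pow_lt; lra).
      assert (b * D1 r <= 0) by nra. set (u := b * D1 r) in *. set (v := / (F r + b) ^ 2) in *. nra. }
    assert (0 <= (1 - r) * (b * (D2 r * (F r + b) - 2 * D1 r ^ 2) / (F r + b) ^ 3)).
    { apply Rmult_le_pos. lra. apply Rdiv_le_0_compat. apply Rmult_le_pos; lra. apply pow_lt; lra. }
    lra.
Qed.
End KS.

Lemma loc_pos r (Pr : R -> Prop) : 0 < r -> (forall t, 0 < t -> Pr t) -> locally r Pr.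
Proof.
  intros Hr H. apply (filter_imp (fun t => 0 < t)); auto.
  apply (open_gt 0). exact Hr.
Qed.

Theorem mainTheorem7 (mu Ts Tw : R) (Qw : nat) :
  0 < mu -> 0 < Ts -> 0 < Tw -> (1 <= Qw)%nat ->
  (forall rho, 0 < rho < 1 ->
     ex_derive (f_lowpower mu Ts Qw) rho /\
     ex_derive (Derive (f_lowpower mu Ts Qw)) rho /\
     Derive_n (f_lowpower mu Ts Qw) 2 rho * (f_lowpower mu Ts Qw rho + (Ts + Tw))
       >= 2 * (Derive (f_lowpower mu Ts Qw) rho) ^ 2)
  /\
  (forall sigma_off, 0 <= sigma_off < 1 ->
     concave_on 0 1 (E_energy mu Ts Tw sigma_off Qw)).
Proof.
  intros Hmu HTs HTw HQ.
  destruct Qw as [|m]; [lia|]. clear HQ.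
  set (c := mu * Ts).
  set (f := f_lowpower mu Ts (S m)).
  assert (Hmu0 : mu <> 0) by lra.
  assert (Hf : forall r, 0 < r -> F0 (phi m) c mu r = f r).
  { intros r Hr. unfold f, F0. rewrite f_closed by auto. unfold c. f_equal. f_equal. ring. }
  assert (Hd1 : forall r, 0 < r -> is_derive f r (D1 (phi m) (phi1 m) c mu r)).
  { intros r Hr. apply (is_derive_ext_loc (F0 (phi m) c mu)).
    apply loc_pos; auto. apply F0_deriv; auto. apply phi_deriv. lra. }
  assert (HDf : forall r, 0 < r -> Derive f r = D1 (phi m) (phi1 m) c mu r).
  { intros r Hr. apply is_derive_unique. auto. }
  assert (Hd2 : forall r, 0 < r -> is_derive (D1 (phi m) (phi1 m) c mu) r
                         (D2 (phi m) (phi1 m) (phi2 m) c mu r)).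
  { intros r Hr. apply D1_deriv; auto. apply phi_deriv. apply phi1_deriv. lra. }
  assert (Hd2' : forall r, 0 < r -> is_derive (Derive f) r (D2 (phi m) (phi1 m) (phi2 m) c mu r)).
  { intros r Hr. apply (is_derive_ext_loc (D1 (phi m) (phi1 m) c mu)).
    apply loc_pos; auto. intros t Ht. symmetry. auto. auto. }
  assert (Hc : 0 < c) by (unfold c; nra).
  assert (Ineq : forall r, 0 < r -> D2 (phi m) (phi1 m) (phi2 m) c mu r * (f r + (Ts + Tw))
       >= 2 * D1 (phi m) (phi1 m) c mu r ^ 2).
  { intros r Hr. rewrite <- Hf by auto. unfold D1, D2, F0.
    assert (Hx : 0 <= c * r) by nra.
    pose proof (key_ineq mu Ts Tw r (phi m (c * r)) (- phi1 m (c * r)) (phi2 m (c * r))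
      Hmu HTs HTw Hr (phi_ge0 m _ Hx) (phi1_bounds m _ Hx) (phi2_ge0 m _ Hx)) as K.
    simpl in K. rewrite Ropp_involutive in K. exact K. }
  assert (D1neg : forall r, 0 < r -> D1 (phi m) (phi1 m) c mu r <= 0).
  { intros r Hr. unfold D1. assert (Hx : 0 <= c * r) by nra.
    pose proof (phi_ge0 m _ Hx). pose proof (phi1_bounds m _ Hx).
    assert (0 <= phi m (c * r) / (mu * r ^ 2)) by (apply Rdiv_le_0_compat; [lra| apply Rmult_lt_0_compat; [lra|apply pow_lt; lra]]).
    assert (c * phi1 m (c * r) / (mu * r) <= 0).
    { unfold Rdiv. assert (0 < / (mu * r)) by (apply Rinv_0_lt_compat; nra).
      assert (c * phi1 m (c * r) <= 0) by nra. nra. }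
    lra. }
  assert (Fpos : forall r, 0 < r -> 0 <= f r).
  { intros r Hr. rewrite <- Hf by auto. unfold F0. apply Rdiv_le_0_compat.
    apply phi_ge0; nra. nra. }
  split.
  - intros rho Hr. split; [|split].
    + eexists. apply Hd1. lra.
    + eexists. apply Hd2'. lra.
    + change (Derive_n f 2 rho) with (Derive (Derive f) rho).
      rewrite (is_derive_unique _ _ _ (Hd2' rho ltac:(lra))).
      rewrite HDf by lra. apply Ineq. lra.
  - intros sigma Hs x y t Hx Hy Ht.
    pose proof (K_convex f (D1 (phi m) (phi1 m) c mu) (D2 (phi m) (phi1 m) (phi2 m) c mu) (Ts + Tw)
      (fun r Hr => Hd1 r (proj1 Hr)) (fun r Hr => Hd2 r (proj1 Hr))
      (fun r Hr => Fpos r (proj1 Hr)) (fun r Hr => D1neg r (proj1 Hr))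
      (fun r Hr => Ineq r (proj1 Hr)) ltac:(lra) x y t Hx Hy Ht) as HK.
    assert (HE : forall r, E_energy mu Ts Tw sigma (S m) r = 1 - (1 - sigma) * K f (Ts + Tw) r).
    { intro r. unfold E_energy, K. fold f. replace (f r + Ts + Tw) with (f r + (Ts + Tw)) by ring. ring. }
    rewrite !HE. assert (0 < 1 - sigma) by lra. nra.
Qed.
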